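(* Let $I\subseteq[0,\infty)$ be an interval, let $f:I\to\mathbb{R}$ be twice differentiable on $I^\circ$, and let $a,b\in I^\circ$ with $a<b$ such that $f''\in L^1[a,b]$. Let $q>1$ and $p=\frac{q}{q-1}$. If $|f''|^q$ is quasi-convex on $[a,b]$, then $$\left|\frac{f(a)+f(b)}{2}-\frac{1}{b-a}\int_a^b f(x)\,dx\right|\le \frac{(b-a)^2}{2^{1+\frac1q}}\bigl(\beta(2,p+1)\bigr)^{\frac1p}\left(\max\{|f''(a)|^q,|f''(b)|^q\}\right)^{\frac1q}.$$
   Context: A function $g:[a,b]\to\mathbb{R}$ is quasi-convex on $[a,b]$ if $g(\lambda x+(1-\lambda)y)\le\max\{g(x),g(y)\}$ for all $x,y\in[a,b]$ and $\lambda\in[0,1]$. $\beta(x,y)=\int_0^1 t^{x-1}(1-t)^{y-1}\,dt$ for $x,y>0$. *)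

(* Defs.v *)
From Stdlib Require Import Reals Lra ClassicalEpsilon.
Open Scope R_scope.

(* Real power x^y for x >= 0, with the convention 0^y = 0 (y > 0).
   (Stdlib's Rpower 0 y = exp (y * ln 0) = 1, which is wrong at 0.) *)
Definition rpow (x y : R) : R :=
  if Rlt_dec 0 x then Rpower x y else 0.

Definition is_RInt (f : R -> R) (a b l : R) : Prop :=
  exists pr : Riemann_integrable f a b, RiemannInt pr = l.

(* The Riemann integral as a total function (chosen classically; it is the
   actual integral whenever f is Riemann integrable, the integral being unique). *)
Definition RInt (f : R -> R) (a b : R) : R :=
  epsilon (inhabits 0) (is_RInt f a b).

Definition beta (x y : R) : R :=
  RInt (fun t => rpow t (x - 1) * rpow (1 - t) (y - 1)) 0 1.

Definition is_interval (I : R -> Prop) : Prop :=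
  forall x y z, I x -> I z -> x <= y <= z -> I y.

(* Interior of I: Stdlib's Rtopology.interior (a neighbourhood of x lies in I). *)

Definition quasi_convex_on (g : R -> R) (a b : R) : Prop :=
  forall x y lam, a <= x <= b -> a <= y <= b -> 0 <= lam <= 1 ->
    g (lam * x + (1 - lam) * y) <= Rmax (g x) (g y).

(* Main.v *)
Require Import Defs.
From Stdlib Require Import Reals Lra ClassicalEpsilon.
From Coquelicot Require Import Coquelicot.
Open Scope R_scope.

Lemma rpow_ge0 x y : 0 <= rpow x y.
Proof. unfold rpow; destruct (Rlt_dec 0 x); [unfold Rpower; left; apply exp_pos | lra]. Qed.
Lemma rpow_pos x y : 0 < x -> rpow x y = Rpower x y.
Proof. intros; unfold rpow; destruct (Rlt_dec 0 x); [reflexivity| lra]. Qed.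
Lemma rpow_npos x y : x <= 0 -> rpow x y = 0.
Proof. intros; unfold rpow; destruct (Rlt_dec 0 x); [lra| reflexivity]. Qed.

Lemma rpow_inv y q : 0 <= y -> 0 < q -> rpow (rpow y q) (1/q) = y.
Proof.
  intros Hy Hq. destruct (Req_dec y 0).
  - subst; rewrite (rpow_npos 0) by lra; apply rpow_npos; lra.
  - rewrite (rpow_pos y) by lra. rewrite rpow_pos by (unfold Rpower; apply exp_pos).
    rewrite Rpower_mult. replace (q*(1/q)) with 1 by (field; lra). apply Rpower_1; lra.
Qed.

Lemma rpow_le u v r : 0 <= u <= v -> 0 <= r -> rpow u r <= rpow v r.
Proof.
  intros Huv Hr. destruct (Req_dec u 0).
  - subst; rewrite rpow_npos by lra; apply rpow_ge0.
  - rewrite !rpow_pos by lra. apply Rle_Rpower_l; lra.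
Qed.

Lemma Rpower_lt_base x y s : 0 < x < y -> 0 < s -> Rpower x s < Rpower y s.
Proof.
  intros. unfold Rpower; apply exp_increasing; apply Rmult_lt_compat_l; [lra| apply ln_increasing; lra].
Qed.

Lemma is_derive_val (f : R -> R) x l l' : l = l' -> is_derive f x l -> is_derive f x l'.
Proof. intros ->; auto. Qed.

Lemma rpow_deriv r u : 1 < r -> is_derive (fun u => rpow u r) u (r * rpow u (r-1)).
Proof.
  intros Hr. destruct (Rlt_or_le 0 u) as [Hu|Hu].
  - rewrite rpow_pos by lra.
    apply is_derive_ext_loc with (fun t => Rpower t r).
    + apply (filter_imp (fun t => 0 < t)). intros t Ht; rewrite rpow_pos; auto.
      apply open_gt; exact Hu.
    + apply is_derive_Reals. apply derivable_pt_lim_power; exact Hu.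
  - destruct Hu as [Hu|Hu].
    + rewrite rpow_npos by lra. rewrite Rmult_0_r.
      apply is_derive_ext_loc with (fun _ => 0).
      * apply (filter_imp (fun t => t < 0)). intros t Ht; rewrite rpow_npos; lra.
        apply open_lt; exact Hu.
      * exact (is_derive_const 0 u).
    + subst u. rewrite rpow_npos by lra. rewrite Rmult_0_r.
      apply is_derive_Reals. intros eps Heps.
      assert (Hd: 0 < Rpower eps (1/(r-1))) by (unfold Rpower; apply exp_pos).
      exists (mkposreal _ Hd). intros h Hh0 Hh. simpl in Hh.
      rewrite Rplus_0_l, (rpow_npos 0) by lra.
      destruct (Rlt_or_le 0 h).
      * rewrite rpow_pos by lra.
        replace (Rpower h r) with (Rpower h ((r-1)+1)) by (f_equal; ring).
        rewrite Rpower_plus, Rpower_1 by lra.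
        replace ((Rpower h (r-1)*h - 0)/h - 0) with (Rpower h (r-1)) by (field; lra).
        rewrite Rabs_pos_eq by (unfold Rpower; left; apply exp_pos).
        replace eps with (Rpower (Rpower eps (1/(r-1))) (r-1)).
        -- apply Rpower_lt_base; [split; [lra| rewrite Rabs_pos_eq in Hh; lra] | lra].
        -- rewrite Rpower_mult. replace (1/(r-1)*(r-1)) with 1 by (field; lra). apply Rpower_1; lra.
      * rewrite rpow_npos by lra. replace ((0-0)/h-0) with 0 by (field; lra). rewrite Rabs_R0; lra.
Qed.

Lemma rpow_comp_deriv r t : 1 < r -> is_derive (fun t => rpow (1-t) r) t (- (r * rpow (1-t) (r-1))).
Proof.
  intros Hr.
  assert (Hlin : is_derive (fun t => 1 - t) t (-1)).
  { eapply is_derive_val; [| apply (is_derive_minus (fun _ => 1) (fun t => t) t _ _ (is_derive_const 1 t) (is_derive_id t))].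
    unfold minus, plus, opp, zero, one; simpl. ring. }
  eapply is_derive_val; [| apply (is_derive_comp (fun u => rpow u r) (fun t => 1 - t) t _ _ (rpow_deriv r (1-t) Hr) Hlin)].
  unfold scal; simpl; unfold mult; simpl. ring.
Qed.

Lemma RInt_of_is (g : R -> R) a b l : is_RInt g a b l -> Defs.RInt g a b = l.
Proof.
  intros H.
  assert (ex : ex_RInt g a b) by (exists l; exact H).
  pose (pr := ex_RInt_Reals_0 _ _ _ ex).
  assert (e : RiemannInt pr = l) by (rewrite <- RInt_Reals; apply is_RInt_unique; exact H).
  assert (H1 : Defs.is_RInt g a b l) by (exists pr; exact e).
  unfold Defs.RInt.
  destruct (epsilon_spec (inhabits 0) (Defs.is_RInt g a b) (ex_intro _ l H1)) as [pr2 e2].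
  rewrite <- e2, <- e. apply RiemannInt_P5.
Qed.

Lemma beta_val p : 1 < p -> beta 2 (p+1) = 1/((p+1)*(p+2)).
Proof.
  intros Hp. unfold beta. apply RInt_of_is.
  set (G := fun t => (-/(p+1)) * rpow (1-t) (p+1) + (/(p+2)) * rpow (1-t) (p+2)).
  set (df := fun t => rpow (1-t) p - rpow (1-t) (p+1)).
  assert (HG : forall t, is_derive G t (df t)).
  { intro t. unfold G, df.
    eapply is_derive_val; [| apply (is_derive_plus (fun t => (-/(p+1)) * rpow (1-t) (p+1))
                (fun t => (/(p+2)) * rpow (1-t) (p+2)) t _ _
                (is_derive_scal _ t _ _ (rpow_comp_deriv (p+1) t ltac:(lra)))
                (is_derive_scal _ t _ _ (rpow_comp_deriv (p+2) t ltac:(lra))))].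
    unfold plus; simpl.
    replace (p+1-1) with p by ring. replace (p+2-1) with (p+1) by ring. field. lra. }
  assert (Hc : forall t, continuous df t).
  { intro t. apply (@ex_derive_continuous R_AbsRing R_NormedModule df t). unfold df.
    eexists. apply (is_derive_minus (fun t => rpow (1-t) p) (fun t => rpow (1-t) (p+1)) t _ _
      (rpow_comp_deriv p t Hp) (rpow_comp_deriv (p+1) t ltac:(lra))). }
  pose proof (is_RInt_derive G df 0 1 (fun x _ => HG x) (fun x _ => Hc x)) as H.
  replace (1/((p+1)*(p+2))) with (minus (G 1) (G 0)).
  - apply is_RInt_ext with df; [| exact H].
    intros x Hx. rewrite Rmin_left, Rmax_right in Hx by lra.
    unfold df. rewrite !rpow_pos by lra.
    replace (2-1) with 1 by ring. replace (p+1-1) with p by ring.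
    rewrite Rpower_1 by lra. rewrite Rpower_plus. rewrite (Rpower_1 (1-x)) by lra. assert (E: forall A, A - A * (1-x) = x * A) by (intros; ring). apply E.
  - unfold G, minus, plus, opp; simpl.
    replace (1-1) with 0 by ring. replace (1-0) with 1 by ring.
    rewrite !(rpow_npos 0) by lra. rewrite !rpow_pos by lra.
    unfold Rpower. rewrite ln_1, !Rmult_0_r, exp_0. field. lra.
Qed.

Lemma const_ineq q : 1 < q ->
  let p := q / (q - 1) in
  rpow 2 (1 + 1/q) <= 12 * rpow (1/((p+1)*(p+2))) (1/p).
Proof.
  intros Hq p.
  assert (Hp : 1 < p).
  { unfold p. apply (Rmult_lt_reg_r (q-1)); [lra|]. unfold Rdiv. rewrite Rmult_assoc, Rinv_l; lra. }
  assert (H1q : 1/q = 1 - 1/p) by (unfold p; field; lra).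
  assert (L3 : 1 <= ln 3).
  { rewrite <- (ln_exp 1). apply ln_le; [apply exp_pos| apply exp_le_3]. }
  assert (Hkey : (p+1)*(p+2) <= 2 * exp (p * ln 3)).
  { set (s := p - 1).
    replace (p * ln 3) with (ln 3 + s*ln 3 / 2 + s * ln 3 / 2) by (unfold s; field).
    rewrite !exp_plus, exp_ln by lra.
    pose proof (exp_ineq1_le (s*ln 3/2)).
    assert (0 <= s) by (unfold s; lra).
    assert (s <= s * ln 3) by nra.
    replace p with (s+1) by (unfold s; ring).
    nra. }
  rewrite !rpow_pos by (try lra; apply Rdiv_lt_0_compat; nra).
  unfold Rpower.
  replace 12 with (exp (ln 12)) at 1 by (apply exp_ln; lra).
  rewrite <- exp_plus.
  assert (Hle : forall x y, x <= y -> exp x <= exp y).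
  { intros x y [Hxy|Hxy]; [left; apply exp_increasing; auto| rewrite Hxy; lra]. }
  apply Hle.
  replace 12 with (2*2*3) by ring.
  rewrite !ln_mult by lra.
  unfold Rdiv at 3. rewrite Rmult_1_l, ln_Rinv by nra.
  assert (HL : ln ((p+1)*(p+2)) <= ln 2 + p * ln 3).
  { rewrite <- (ln_exp (p * ln 3)), <- ln_mult by (try lra; apply exp_pos).
    apply ln_le; [nra| lra]. }
  rewrite H1q.
  assert (Hu : 0 < 1/p) by (apply Rdiv_lt_0_compat; lra).
  assert (Hup : 1/p * p = 1) by (field; lra).
  set (u := 1/p) in *. set (Lp := ln ((p+1)*(p+2))) in *.
  assert (u * Lp <= u * (ln 2 + p * ln 3)) by (apply Rmult_le_compat_l; lra).
  nra.
Qed.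

Lemma dval (f : R -> R) (x l' l : R) : is_derive f x l -> l = l' -> is_derive f x l'.
Proof. intros H ->; auto. Qed.

Lemma dplus (f g : R -> R) (x a b : R) : is_derive f x a -> is_derive g x b -> is_derive (fun t => f t + g t) x (a + b).
Proof. intros; exact (is_derive_plus f g x a b H H0). Qed.
Lemma dminus (f g : R -> R) (x a b : R) : is_derive f x a -> is_derive g x b -> is_derive (fun t => f t - g t) x (a - b).
Proof. intros; exact (is_derive_minus f g x a b H H0). Qed.
Lemma dmult (f g : R -> R) (x a b : R) : is_derive f x a -> is_derive g x b -> is_derive (fun t => f t * g t) x (a * g x + f x * b).
Proof. intros; exact (is_derive_mult f g x a b H H0 Rmult_comm). Qed.
Lemma ddiv (f : R -> R) (c x a : R) : is_derive f x a -> is_derive (fun t => f t / c) x (a / c).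
Proof. intros. unfold Rdiv. eapply dval; [apply (dmult f (fun _ => /c) x a 0 H (is_derive_const _ _))|]. ring. Qed.
Lemma dconst (c x : R) : is_derive (fun _ => c) x 0.
Proof. exact (is_derive_const c x). Qed.
Lemma did (x : R) : is_derive (fun t : R => t) x 1.
Proof. exact (is_derive_id x). Qed.

Ltac dtac := repeat match goal with
 | |- is_derive (fun _ => ?c) _ _ => apply dconst
 | |- is_derive (fun t => t) _ _ => apply did
 | |- is_derive (fun t => _ + _) _ _ => apply dplus
 | |- is_derive (fun t => _ - _) _ _ => apply dminus
 | |- is_derive (fun t => _ * _) _ _ => apply dmult
 | |- is_derive (fun t => _ / _) _ _ => apply ddiv
 end.

Theorem theorem2p3
  (I : R -> Prop) (HI : is_interval I) (HI0 : forall x, I x -> 0 <= x)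
  (f f1 f2 : R -> R)
  (Hf1 : forall x, interior I x -> derivable_pt_lim f x (f1 x))
  (Hf2 : forall x, interior I x -> derivable_pt_lim f1 x (f2 x))
  (a b : R) (Ha : interior I a) (Hb : interior I b) (Hab : a < b)
  (Hint : Riemann_integrable f2 a b)
  (q : R) (Hq : 1 < q)
  (Hqc : quasi_convex_on (fun x => rpow (Rabs (f2 x)) q) a b) :
  let p := q / (q - 1) in
  Rabs ((f a + f b) / 2 - 1 / (b - a) * Defs.RInt f a b)
  <= (b - a) ^ 2 / rpow 2 (1 + 1 / q)
     * rpow (beta 2 (p + 1)) (1 / p)
     * rpow (Rmax (rpow (Rabs (f2 a)) q) (rpow (Rabs (f2 b)) q)) (1 / q).
Proof.
  cbv zeta.
  pose proof (const_ineq q Hq) as Hconst. cbv zeta in Hconst.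
  set (p := q / (q - 1)) in *.
  assert (Hp : 1 < p).
  { unfold p. apply (Rmult_lt_reg_r (q-1)); [lra|]. unfold Rdiv. rewrite Rmult_assoc, Rinv_l; lra. }
  rewrite (beta_val p Hp).
  set (M := Rmax (rpow (Rabs (f2 a)) q) (rpow (Rabs (f2 b)) q)).
  set (K := rpow M (1/q)).
  assert (HK : forall x, a<=x<=b -> Rabs (f2 x) <= K).
  { intros x Hx.
    assert (Hm : rpow (Rabs (f2 x)) q <= M).
    { assert (Hl : 0 <= (b-x)/(b-a) <= 1).
      { split; [apply Rdiv_le_0_compat; lra |].
        apply (Rmult_le_reg_r (b-a)); [lra|]. unfold Rdiv. rewrite Rmult_assoc, Rinv_l; lra. }
      pose proof (Hqc a b ((b-x)/(b-a)) ltac:(lra) ltac:(lra) Hl) as H.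
      cbv beta in H.
      replace ((b-x)/(b-a)*a + (1-(b-x)/(b-a))*b) with x in H by (field; lra). exact H. }
    rewrite <- (rpow_inv (Rabs (f2 x)) q) by (try apply Rabs_pos; lra).
    apply rpow_le; [split; [apply rpow_ge0| exact Hm] | left; apply Rdiv_lt_0_compat; lra]. }
  destruct Ha as [da Hda]. destruct Hb as [db Hdb].
  set (d := Rmin da db).
  assert (Hd0 : 0 < d) by (unfold d; apply Rmin_pos; apply cond_pos).
  assert (Hdda : d <= da) by apply Rmin_l.
  assert (Hddb : d <= db) by apply Rmin_r.
  assert (HIa : I a) by (apply Hda; unfold disc; rewrite Rminus_diag, Rabs_R0; apply cond_pos).
  assert (HIb : I b) by (apply Hdb; unfold disc; rewrite Rminus_diag, Rabs_R0; apply cond_pos).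
  assert (HIy : forall y, a - d < y < b + d -> I y).
  { intros y Hy. destruct (Rlt_or_le y a).
    - apply Hda; unfold disc; apply Rabs_def1; lra.
    - destruct (Rle_or_lt y b).
      + apply (HI a y b); auto.
      + apply Hdb; unfold disc; apply Rabs_def1; lra. }
  assert (Hinx : forall x, a - d/2 < x < b + d/2 -> interior I x).
  { intros x Hx. assert (Hd2: 0 < d/2) by lra. exists (mkposreal _ Hd2). intros y Hy.
    unfold disc in Hy; simpl in Hy. apply HIy. apply Rabs_def2 in Hy. lra. }
  assert (Hfc : forall x, a - d/2 < x < b + d/2 -> continuous f x).
  { intros x Hx. apply continuity_pt_filterlim. apply derivable_continuous_pt.
    exists (f1 x). exact (Hf1 x (Hinx x Hx)). }
  assert (Hex : forall y, a - d/2 < y < b + d/2 -> ex_RInt f a y).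
  { intros y Hy. apply (@ex_RInt_continuous R_CompleteNormedModule). intros z Hz. apply Hfc.
    unfold Rmin, Rmax in Hz; destruct (Rle_dec a y); lra. }
  set (Phi := fun x => RInt f a x).
  assert (HPhi : forall c, a <= c <= b -> is_derive Phi c (f c)).
  { intros c Hc. apply is_derive_RInt with a.
    - apply (filter_imp (fun y => a - d/2 < y /\ y < b + d/2)).
      + intros y Hy; apply RInt_correct, Hex; exact Hy.
      + apply open_and; [apply open_gt | apply open_lt | split; lra].
    - apply Hfc; lra. }
  assert (Hf1d : forall c, a <= c <= b -> is_derive f c (f1 c)).
  { intros c Hc. apply is_derive_Reals, Hf1, Hinx; lra. }
  assert (Hf2d : forall c, a <= c <= b -> is_derive f1 c (f2 c)).
  { intros c Hc. apply is_derive_Reals, Hf2, Hinx; lra. }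
  assert (HPa : Phi a = 0) by (exact (@RInt_point R_CompleteNormedModule a f)).
  assert (Hbound : forall s, (s = 1 \/ s = -1) ->
     0 <= K*((b-a)*(b-a)*(b-a))/12 + s*((b-a)/2*(f a + f b) - Phi b)).
  { intros s Hs.
    set (psi := fun x => K*((x-a)*(x-a)*(x-a))/12 + s*((x-a)/2*(f a + f x) - Phi x)).
    set (dpsi := fun x => K*((x-a)*(x-a))/4 + s*((f a + f x)/2 + (x-a)/2 * f1 x - f x)).
    set (ddpsi := fun x => K*(x-a)/2 + s*((x-a)/2*f2 x)).
    assert (D1 : forall c, a <= c <= b -> derivable_pt_lim psi c (dpsi c)).
    { intros c Hc. apply is_derive_Reals. unfold psi, dpsi.
      eapply dval; [dtac; first [apply Hf1d; exact Hc | apply Hf2d; exact Hc | apply HPhi; exact Hc] |].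
      cbv beta. field. }
    assert (D2 : forall c, a <= c <= b -> derivable_pt_lim dpsi c (ddpsi c)).
    { intros c Hc. apply is_derive_Reals. unfold dpsi, ddpsi.
      eapply dval; [dtac; first [apply Hf1d; exact Hc | apply Hf2d; exact Hc | apply HPhi; exact Hc] |].
      cbv beta. field. }
    assert (Hdd : forall c, a <= c <= b -> 0 <= ddpsi c).
    { intros c Hc. unfold ddpsi. pose proof (HK c Hc) as Hk.
      assert (-K <= f2 c <= K).
      { split; [pose proof (Rle_abs (- f2 c)) as Ha'; rewrite Rabs_Ropp in Ha'; lra
               | pose proof (Rle_abs (f2 c)); lra]. }
      destruct Hs; subst s; nra. }
    assert (Hdp : forall x, a <= x <= b -> 0 <= dpsi x).
    { intros x Hx. destruct (Req_dec x a) as [->|Hxa].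
      - unfold dpsi. replace (a - a) with 0 by ring. right; field.
      - destruct (MVT_cor2 dpsi ddpsi a x ltac:(lra) (fun c Hc => D2 c ltac:(lra))) as [c [Hc1 Hc2]].
        assert (dpsi a = 0) by (unfold dpsi; field).
        pose proof (Hdd c ltac:(lra)). nra. }
    destruct (MVT_cor2 psi dpsi a b Hab D1) as [c [Hc1 Hc2]].
    assert (psi a = 0) by (unfold psi; rewrite HPa; field).
    pose proof (Hdp c ltac:(lra)).
    change (0 <= psi b). nra. }
  assert (HR : Defs.RInt f a b = Phi b).
  { apply RInt_of_is. apply (@RInt_correct R_CompleteNormedModule), Hex. lra. }
  rewrite HR.
  pose proof (Hbound 1 (or_introl eq_refl)) as B1.
  pose proof (Hbound (-1) (or_intror eq_refl)) as B2.
  set (A := (f a + f b) / 2 - 1 / (b - a) * Phi b).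
  assert (HPA : (b-a)/2*(f a + f b) - Phi b = (b-a)*A) by (unfold A; field; lra).
  rewrite HPA in B1, B2.
  assert (HK0 : 0 <= K) by apply rpow_ge0.
  assert (HA : Rabs A <= K*((b-a)*(b-a))/12).
  { apply Rabs_le. split.
    - apply (Rmult_le_reg_l (b-a)); [lra|]. nra.
    - apply (Rmult_le_reg_l (b-a)); [lra|]. nra. }
  set (X := rpow (1 / ((p + 1) * (p + 2))) (1 / p)) in *.
  set (R2 := rpow 2 (1 + 1/q)) in *.
  assert (HR2 : 0 < R2) by (unfold R2; rewrite rpow_pos by lra; unfold Rpower; apply exp_pos).
  assert (E : (b - a) ^ 2 / R2 * X * K = (K*((b-a)*(b-a))) * (X / R2)) by (field; lra).
  rewrite E.
  assert (HX : 1/12 <= X / R2).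
  { assert (X/R2 - 1/12 = (12*X - R2)/(12*R2)) by (field; lra).
    assert (0 <= (12*X - R2)/(12*R2)) by (apply Rdiv_le_0_compat; lra). lra. }
  assert (0 <= K*((b-a)*(b-a))) by nra.
  nra.
Qed.
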